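(* Let $G$ and $H$ be finite simple graphs without isolated vertices. Let $g=(A_0,A_1,A_2)$ be a $\gamma_{tR}(G)$-function with $|A_2|$ maximum among all $\gamma_{tR}(G)$-functions, and let $h=(B_0,B_1,B_2)$ be a $\gamma_{tR}(H)$-function with $|B_2|$ maximum among all $\gamma_{tR}(H)$-functions. Then $$\max\{\rho(H)\gamma_{tR}(G),\rho(G)\gamma_{tR}(H)\}\le \gamma_{tR}(G\times H)\le \gamma_{tR}(H)\gamma_{tR}(G)-2|A_2||B_2|.$$
   Context: For a graph $G$ without isolated vertices, a total Roman dominating function is a map $f:V(G)\to\{0,1,2\}$, written $f=(V_0,V_1,V_2)$ with $V_i=\{v: f(v)=i\}$, such that every vertex in $V_0$ has a neighbor in $V_2$ and the subgraph induced by $V_1\cup V_2$ has no isolated vertices. Its weight is $\omega(f)=\sum_v f(v)$. The total Roman domination number $\gamma_{tR}(G)$ is the minimum weight of a total Roman dominating function; a $\gamma_{tR}(G)$-function is one attaining it. A packing of $G$ is a set $D$ of vertices with $N[u]\cap N[v]=\emptyset$ for all distinct $u,v\in D$ (closed neighborhoods); $\rho(G)$ is the maximum size of a packing. The direct product $G\times H$ has vertex set $V(G)\times V(H)$, with $(g,h)(g',h')$ an edge iff $gg'\in E(G)$ and $hh'\in E(H)$. *)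

(* Defs.v *)
From mathcomp Require Import all_boot.
Set Implicit Arguments. Unset Strict Implicit. Unset Printing Implicit Defensive.

Definition simple_graph (T : finType) (e : rel T) : Prop :=
  symmetric e /\ irreflexive e.

Definition no_isolated (T : finType) (e : rel T) : Prop :=
  forall v : T, exists u : T, e v u.

Definition direct_prod (T1 T2 : finType) (e1 : rel T1) (e2 : rel T2)
  : rel (T1 * T2) :=
  fun x y => e1 x.1 y.1 && e2 x.2 y.2.

Definition rfun (T : finType) := {ffun T -> 'I_3}.

Definition level (T : finType) (f : rfun T) (i : nat) : {set T} :=
  [set v | nat_of_ord (f v) == i].

Definition weight (T : finType) (f : rfun T) : nat := \sum_(v : T) nat_of_ord (f v).

Definition is_TRDF (T : finType) (e : rel T) (f : rfun T) : bool :=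
  [forall v, (nat_of_ord (f v) == 0) ==> [exists u, e v u && (nat_of_ord (f u) == 2)]]
  && [forall v, (nat_of_ord (f v) != 0) ==> [exists u, e v u && (nat_of_ord (f u) != 0)]].

(* gamma_tR: minimum weight of a TRDF (default 2|V| is never attained as
   a strict bound issue, since the all-2 function is a TRDF when there are
   no isolated vertices). *)
Definition gamma_tR (T : finType) (e : rel T) : nat :=
  \big[minn/(2 * #|T|)%N]_(f : rfun T | is_TRDF e f) weight f.

Definition is_gamma_tR_fun (T : finType) (e : rel T) (f : rfun T) : Prop :=
  is_TRDF e f /\ weight f = gamma_tR e.

Definition cnbhd (T : finType) (e : rel T) (v : T) : {set T} :=
  [set u | (u == v) || e v u].

Definition packing (T : finType) (e : rel T) (D : {set T}) : bool :=
  [forall u in D, forall v in D, (u != v) ==> [disjoint cnbhd e u & cnbhd e v]].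

Definition rho (T : finType) (e : rel T) : nat :=
  \max_(D : {set T} | packing e D) #|D|.

(* Main.v *)
Require Import Defs.
From mathcomp Require Import all_boot.
Set Implicit Arguments. Unset Strict Implicit.

Lemma trdf0 (T : finType) (e : rel T) (f : rfun T) v :
  is_TRDF e f -> (f v : nat) = 0 -> exists u, e v u /\ (f u : nat) = 2.
Proof.
case/andP=> /forallP /(_ v) /implyP H _ hv.
have /existsP [u /andP [a /eqP b]] := H (introT eqP hv).
by exists u.
Qed.

Lemma trdfN (T : finType) (e : rel T) (f : rfun T) v :
  is_TRDF e f -> exists u, e v u /\ (f u : nat) != 0.
Proof.
move=> hf; case: (f v =P 0 :> nat) => hv.
  by have [u [a b]] := trdf0 hf hv; exists u; rewrite b.
case/andP: hf => _ /forallP /(_ v) /implyP H.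
have /existsP [u /andP [a b]] := H (introN eqP hv).
by exists u.
Qed.

Lemma trdfI (T : finType) (e : rel T) (f : rfun T) :
  (forall v, (f v : nat) = 0 -> exists u, e v u /\ (f u : nat) = 2) ->
  (forall v, exists u, e v u /\ (f u : nat) != 0) -> is_TRDF e f.
Proof.
move=> H0 H1; apply/andP; split; apply/forallP=> v; apply/implyP=> hv.
  by have [u [a b]] := H0 v (eqP hv); apply/existsP; exists u; rewrite a b.
by have [u [a b]] := H1 v; apply/existsP; exists u; rewrite a b.
Qed.

Lemma gamma_le (T : finType) (e : rel T) (f : rfun T) :
  is_TRDF e f -> gamma_tR e <= weight f.
Proof.
move=> hf; rewrite /gamma_tR.
have : f \in index_enum (rfun T) by rewrite mem_index_enum.
elim: (index_enum _) => [//|a r IH]; rewrite inE big_cons.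
case/orP=> [/eqP <-|/IH H]; first by rewrite hf geq_minl.
by case: ifP => // _; rewrite geq_min H orbT.
Qed.

Lemma gamma_ge (T : finType) (e : rel T) k :
  no_isolated e -> (forall f : rfun T, is_TRDF e f -> k <= weight f) -> k <= gamma_tR e.
Proof.
move=> ni H; rewrite /gamma_tR; apply: (big_ind (fun x => k <= x)).
- pose f2 : rfun T := [ffun=> (inord 2 : 'I_3)].
  have -> : (2 * #|T| = weight f2)%N.
    rewrite /weight (eq_bigr (fun _ => 2)); last first.
      by move=> i _; rewrite /f2 !ffunE inordK.
    by rewrite big_const iter_addn_0 mulnC.
  apply: H; apply: trdfI => v; rewrite /f2.
    by rewrite !ffunE inordK.
  by have [u hu] := ni v; exists u; rewrite !ffunE inordK.
- by move=> a b ha hb; rewrite leq_min ha hb.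
- by [].
Qed.

From mathcomp Require Import zify.

Lemma ptw (a b : 'I_3) :
  minn 2 (a * b) + 2 * (a == 2 :> nat) * (b == 2 :> nat) = a * b.
Proof. by case: a => [[|[|[|a]]] //=] ?; case: b => [[|[|[|b]]] //=]. Qed.

Lemma card_level (T : finType) (f : rfun T) :
  #|level f 2| = \sum_x ((f x : nat) == 2).
Proof.
rewrite -sum1_card big_mkcond; apply: eq_bigr => x _; rewrite inE; by case: eqP.
Qed.

Lemma upper (T1 T2 : finType) (e1 : rel T1) (e2 : rel T2) (g : rfun T1) (h : rfun T2) :
  is_TRDF e1 g -> is_TRDF e2 h ->
  gamma_tR (direct_prod e1 e2) + 2 * #|level g 2| * #|level h 2| <= weight h * weight g.
Proof.
move=> tg th.
pose F : rfun (T1 * T2)%type := [ffun p => inord (minn 2 (g p.1 * h p.2))].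
have FE p : (F p : nat) = minn 2 (g p.1 * h p.2).
  by rewrite /F ffunE inordK // ltnS geq_minl.
have tF : is_TRDF (direct_prod e1 e2) F.
  apply: trdfI => [[x y]|[x y]]; rewrite ?FE /=.
    move=> m0; have : (g x * h y == 0) by apply/eqP; lia.
    rewrite muln_eq0 => /orP [/eqP gx|/eqP hy].
      have [u1 [a1 b1]] := trdf0 tg gx; have [u2 [a2 b2]] := @trdfN _ _ _ y th.
      exists (u1, u2); rewrite /direct_prod /= a1 a2 FE /= b1; split=> //; lia.
    have [u2 [a2 b2]] := trdf0 th hy; have [u1 [a1 b1]] := @trdfN _ _ _ x tg.
    exists (u1, u2); rewrite /direct_prod /= a1 a2 FE /= b2; split=> //; lia.
  have [u1 [a1 b1]] := @trdfN _ _ _ x tg; have [u2 [a2 b2]] := @trdfN _ _ _ y th.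
  exists (u1, u2); rewrite /direct_prod /= a1 a2 FE /=; split=> //; lia.
apply: (@leq_trans (weight F + 2 * #|level g 2| * #|level h 2|)).
  by rewrite leq_add2r gamma_le.
have -> : weight F = \sum_x \sum_y minn 2 (g x * h y).
  by rewrite /weight pair_bigA; apply: eq_bigr => p _; rewrite FE.
rewrite !card_level.
have E1 : 2 * (\sum_x ((g x : nat) == 2)) * (\sum_y ((h y : nat) == 2)) =
   \sum_x \sum_y 2 * ((g x : nat) == 2) * ((h y : nat) == 2).
  rewrite (big_distrr 2) /= big_distrl /=; apply: eq_bigr => x _.
  by rewrite big_distrr.
have E2 : weight h * weight g = \sum_x \sum_y g x * h y.
  rewrite mulnC /weight big_distrl /=; apply: eq_bigr => x _.
  by rewrite big_distrr.
rewrite E1 E2 -big_split /=; apply: leq_sum => x _.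
rewrite -big_split /=; apply: leq_sum => y _.
by rewrite ptw.
Qed.

Lemma pack_sum (T : finType) (e : rel T) (D : {set T}) y a :
  packing e D -> \sum_(d in D) (if y \in cnbhd e d then a else 0) <= a.
Proof.
move=> pk.
case: (pickP [pred d | (d \in D) && (y \in cnbhd e d)]) => [d0 /andP [d0D yd0]|none].
  rewrite (bigD1 d0) //= yd0 big1 ?addn0 // => d /andP [dD ne].
  case: ifP => // yd; exfalso.
  have ne' : d0 != d by rewrite eq_sym.
  move: pk => /forallP /(_ d0) /implyP /(_ d0D) /forallP /(_ d) /implyP /(_ dD)
    /implyP /(_ ne') => dis; by rewrite (disjointFr dis yd0) in yd.
rewrite big1 // => d dD; have := none d; rewrite /= dD /=; by move=> ->.
Qed.

Lemma ar1 (s a : nat) : minn 2 s = 0 -> a <= s -> a = 0. Proof. lia. Qed.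
Lemma ar2 (s a : nat) : a = 2 -> a <= s -> minn 2 s = 2. Proof. lia. Qed.
Lemma ar3 (s a : nat) : a != 0 -> a <= s -> minn 2 s != 0. Proof. lia. Qed.

Lemma core (T1 T2 : finType) (e1 : rel T1) (e2 : rel T2) (f : rfun (T1 * T2)%type) D :
  is_TRDF (direct_prod e1 e2) f -> packing e2 D -> #|D| * gamma_tR e1 <= weight f.
Proof.
move=> tf pk.
pose Sm d x := \sum_(y in cnbhd e2 d) (f (x, y) : nat).
pose fd d : rfun T1 := [ffun x => inord (minn 2 (Sm d x))].
have fdE d x : (fd d x : nat) = minn 2 (Sm d x).
  by rewrite /fd ffunE inordK // ltnS geq_minl.
have Sge d x y : y \in cnbhd e2 d -> (f (x, y) : nat) <= Sm d x.
  by move=> yd; rewrite /Sm (bigD1 y) //= leq_addr.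
have dd d : d \in cnbhd e2 d by rewrite inE eqxx.
have nd d y : e2 d y -> y \in cnbhd e2 d by move=> h; rewrite inE h orbT.
have tfd d : is_TRDF e1 (fd d).
  apply: trdfI => x.
    rewrite fdE => m0.
    have f0 : (f (x, d) : nat) = 0.
      exact: ar1 m0 (Sge d x d (dd d)).
    have [[u1 u2] [/andP [/= a1 a2] b]] := trdf0 tf f0.
    exists u1; split=> //; rewrite fdE; exact: ar2 b (Sge d u1 u2 (nd _ _ a2)).
  have [[u1 u2] [/andP [/= a1 a2] b]] := @trdfN _ _ _ (x, d) tf.
  exists u1; split=> //; rewrite fdE; exact: ar3 b (Sge d u1 u2 (nd _ _ a2)).
apply: (@leq_trans (\sum_(d in D) \sum_x Sm d x)).
  rewrite -sum_nat_const; apply: leq_sum => d _.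
  apply: (leq_trans (gamma_le (tfd d))); rewrite /weight; apply: leq_sum => x _.
  by rewrite fdE geq_minr.
have -> : weight f = \sum_x \sum_y (f (x, y) : nat).
  by rewrite pair_bigA /weight; apply: eq_bigr => -[x y] _.
rewrite exchange_big /=; apply: leq_sum => x _.
rewrite /Sm.
under eq_bigr do rewrite big_mkcond /=.
rewrite exchange_big /=; apply: leq_sum => y _.
exact: pack_sum.
Qed.

Lemma swap_trdf (T1 T2 : finType) (e1 : rel T1) (e2 : rel T2) (f : rfun (T1 * T2)%type) :
  is_TRDF (direct_prod e1 e2) f ->
  exists f' : rfun (T2 * T1)%type, is_TRDF (direct_prod e2 e1) f' /\ weight f' = weight f.
Proof.
move=> tf; pose f' : rfun (T2 * T1)%type := [ffun p => f (p.2, p.1)].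
have fE p : f' p = f (p.2, p.1) by rewrite /f' ffunE.
exists f'; split.
  apply: trdfI => -[y x]; rewrite ?fE /=.
    move=> f0; have [[u1 u2] [/andP [/= a1 a2] b]] := trdf0 tf f0.
    by exists (u2, u1); rewrite /direct_prod /= a1 a2 fE.
  have [[u1 u2] [/andP [/= a1 a2] b]] := @trdfN _ _ _ (x, y) tf.
  by exists (u2, u1); rewrite /direct_prod /= a1 a2 fE.
rewrite /weight (eq_bigr (fun p : (T2 * T1)%type => (f (p.2, p.1) : nat))); last by move=> p _; rewrite fE.
rewrite -(pair_bigA _ (fun y x => (f (x, y) : nat))).
rewrite exchange_big pair_bigA /=.
by apply: eq_bigr => -[x y].
Qed.

Lemma rho_le (T : finType) (e : rel T) k w :
  (forall D, packing e D -> #|D| * k <= w) -> rho e * k <= w.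
Proof.
move=> H; rewrite /rho; apply: (big_ind (fun x => x * k <= w)) => //.
by move=> a b ha hb; rewrite /maxn; case: ifP.
Qed.

Unset Implicit Arguments.

Theorem theorem2p1 (T1 T2 : finType) (e1 : rel T1) (e2 : rel T2)
  (sG : simple_graph e1) (sH : simple_graph e2)
  (niG : no_isolated e1) (niH : no_isolated e2)
  (g : rfun T1) (h : rfun T2)
  (hg : is_gamma_tR_fun e1 g)
  (hgmax : forall g' : rfun T1, is_gamma_tR_fun e1 g' ->
             #|level g' 2| <= #|level g 2|)
  (hh : is_gamma_tR_fun e2 h)
  (hhmax : forall h' : rfun T2, is_gamma_tR_fun e2 h' ->
             #|level h' 2| <= #|level h 2|) :
  maxn (rho e2 * gamma_tR e1) (rho e1 * gamma_tR e2)
    <= gamma_tR (direct_prod e1 e2)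
  /\ gamma_tR (direct_prod e1 e2) + 2 * #|level g 2| * #|level h 2|
    <= gamma_tR e2 * gamma_tR e1.
Proof.
case: hg => tg wg; case: hh => th wh; split; last by rewrite -wg -wh upper.
apply: gamma_ge.
  move=> [x y]; have [u1 a1] := niG x; have [u2 a2] := niH y.
  by exists (u1, u2); rewrite /direct_prod /= a1 a2.
move=> f tf; rewrite geq_max; apply/andP; split.
  by apply: rho_le => D pk; exact: core tf pk.
have [f' [tf' <-]] := swap_trdf tf.
by apply: rho_le => D pk; exact: core tf' pk.
Qed.
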